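(* In the setting described in the context, let $S_1(B)$ be the set of points $(x_1,x_2,x_3,y_1,y_2,y_3)\in S_0(B)$ for which there exist non-zero rationals $g$ and $\nu$ such that \[a_2x_1=\nu\{4a_1y_1-5g^2a_2y_2\}\quad\text{and}\quad a_1x_2=\nu g^3\{5a_1y_1-4g^2a_2y_2\},\] and let $S_1^*(B)$ be the set of quadruples $(x_1,x_2,y_1,y_2)$ for which there is a pair $(x_3,y_3)$ with $(x_1,x_2,x_3,y_1,y_2,y_3)\in S_1(B)$. Then \[\#S_1(B)=\#S_1^*(B)\ll B^{1/2}.\]
   Context: Let $a_1,a_2,a_3$ be non-zero square-free pairwise coprime integers, let $B\ge 2$, and let $X_1,X_2,X_3,Y_1,Y_2,Y_3$ be powers of 2 not exceeding $2B$ with $X_i^2Y_i^3\le 32B/|a_i|$ for $i=1,2,3$, and assume moreover that $B^{1/5-1/60}\le X_k\le B^{1/5+1/60}$ and $B^{1/5-1/90}\le Y_k\le B^{1/5+1/90}$ for $k=1,2,3$. Let $S_0(B)$ be the set of 6-tuples of positive integers $(x_1,x_2,x_3,y_1,y_2,y_3)$ with $\tfrac12X_i<x_i\le X_i$ and $\tfrac12Y_i<y_i\le Y_i$ ($i=1,2,3$), satisfying $a_1x_1^2y_1^3+a_2x_2^2y_2^3+a_3x_3^2y_3^3=0$, $\gcd(x_1y_1,x_2y_2,x_3y_3)=\gcd(a_1a_2a_3,x_1x_2x_3y_1y_2y_3)=1$, and with $a_1y_1,a_2y_2,a_3y_3$ square-free. The implied constant is absolute. *)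

(* Defs.v *)
From HB Require Import structures.
From mathcomp Require Import all_boot all_order all_algebra.
From mathcomp Require Import boolp reals exp.
Set Implicit Arguments. Unset Strict Implicit. Unset Printing Implicit Defensive.
Import Order.TTheory GRing.Theory Num.Theory.
Local Open Scope ring_scope.

Definition squarefree (n : int) : Prop :=
  n != 0 /\ forall d : nat, (d ^ 2 %| absz n)%N -> d = 1%N.

Definition is_pow2 (n : nat) : Prop := exists k : nat, n = (2 ^ k)%N.

Definition S0P (a1 a2 a3 : int) (X1 X2 X3 Y1 Y2 Y3 : nat)
    (x1 x2 x3 y1 y2 y3 : nat) : Prop :=
  [/\ [/\ (X1 < 2 * x1 <= 2 * X1)%N, (X2 < 2 * x2 <= 2 * X2)%N
         & (X3 < 2 * x3 <= 2 * X3)%N],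
      [/\ (Y1 < 2 * y1 <= 2 * Y1)%N, (Y2 < 2 * y2 <= 2 * Y2)%N
         & (Y3 < 2 * y3 <= 2 * Y3)%N] &
   [/\ a1 * (x1 ^ 2 * y1 ^ 3)%:Z + a2 * (x2 ^ 2 * y2 ^ 3)%:Z
         + a3 * (x3 ^ 2 * y3 ^ 3)%:Z = 0,
       gcdn (gcdn (x1 * y1) (x2 * y2)) (x3 * y3) = 1%N,
       gcdn (absz (a1 * a2 * a3)) (x1 * x2 * x3 * y1 * y2 * y3) = 1%N &
       [/\ squarefree (a1 * y1%:Z), squarefree (a2 * y2%:Z)
         & squarefree (a3 * y3%:Z)]]].

Definition S1P (a1 a2 a3 : int) (X1 X2 X3 Y1 Y2 Y3 : nat)
    (x1 x2 x3 y1 y2 y3 : nat) : Prop :=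
  S0P a1 a2 a3 X1 X2 X3 Y1 Y2 Y3 x1 x2 x3 y1 y2 y3 /\
  exists g nu : rat, [/\ g != 0, nu != 0,
    (a2 * x1%:Z)%:~R = nu * (4 * a1%:~R * y1%:R - 5 * g ^+ 2 * a2%:~R * y2%:R)
  & (a1 * x2%:Z)%:~R
      = nu * g ^+ 3 * (5 * a1%:~R * y1%:R - 4 * g ^+ 2 * a2%:~R * y2%:R)].

(* ambient finite type containing the dyadic box: ((((x1,x2),x3),y1),y2),y3 *)
Definition box (X1 X2 X3 Y1 Y2 Y3 : nat) : finType :=
  ('I_X1.+1 * 'I_X2.+1 * 'I_X3.+1 * 'I_Y1.+1 * 'I_Y2.+1 * 'I_Y3.+1)%type.

Definition S1set (a1 a2 a3 : int) (X1 X2 X3 Y1 Y2 Y3 : nat)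
  : {set box X1 X2 X3 Y1 Y2 Y3} :=
  [set t : box X1 X2 X3 Y1 Y2 Y3 |
    `[< S1P a1 a2 a3 X1 X2 X3 Y1 Y2 Y3
          (val t.1.1.1.1.1) (val t.1.1.1.1.2) (val t.1.1.1.2)
          (val t.1.1.2) (val t.1.2) (val t.2) >]].

Definition proj4 (X1 X2 X3 Y1 Y2 Y3 : nat) (t : box X1 X2 X3 Y1 Y2 Y3) :
  ('I_X1.+1 * 'I_X2.+1 * 'I_Y1.+1 * 'I_Y2.+1)%type :=
  (t.1.1.1.1.1, t.1.1.1.1.2, t.1.1.2, t.1.2).

Definition S1star (a1 a2 a3 : int) (X1 X2 X3 Y1 Y2 Y3 : nat) :=
  [set proj4 t | t in S1set a1 a2 a3 X1 X2 X3 Y1 Y2 Y3].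

(* Main.v *)
Require Import Defs.
From HB Require Import structures.
From mathcomp Require Import all_boot all_order all_algebra.
From mathcomp Require Import boolp reals exp.
From mathcomp Require Import zify ring lra.
Import Order.TTheory GRing.Theory Num.Theory.
Local Open Scope ring_scope.

Ltac nlia := repeat match goal with H : _ |- _ => clear H end; lia.

Lemma PoszX (m n : nat) : ((m ^ n)%N)%:Z = (m%:Z) ^+ n.
Proof. by rewrite -!natz natrX. Qed.

Lemma logn_int_dvd (p n : nat) (z : int) : prime p -> z != 0 ->
  ((p ^ n)%:Z %| z)%Z = (n <= logn p `|z|)%N.
Proof.
move=> pp z0; rewrite dvdzE /= pfactor_dvdn //; by rewrite absz_gt0.
Qed.

Lemma key (p : nat) (L c x s r W w : int) :
  prime p -> (p %| `|s|)%N -> ~~ (p %| `|r|)%N -> (p = 2 -> (4 %| `|s|)%N) ->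
  (logn p `|w| <= 1)%N -> (logn p `|c| <= 1)%N -> coprime `|c| `|x| ->
  x != 0 -> c != 0 -> w != 0 -> r != 0 ->
  5*W*s^+2 - 4*w*r^+2 != 0 ->
  L * s^+3 * (4*W*s^+2 - 5*w*r^+2) = c * x * r^+3 * (5*W*s^+2 - 4*w*r^+2) ->
  (3 * logn p `|s| <= logn p 4 + logn p `|x|)%N.
Proof.
move=> pp ps pr p2 hw hc cop x0 c0 w0 r0 Q0 E.
have [->|s0] := eqVneq s 0; first by rewrite /= logn0.
set k := logn p `|s|.
have k1 : (1 <= k)%N by rewrite -pfactor_dvdn ?expn1 // absz_gt0.
have lr : logn p `|r| = 0%N.
  apply/eqP; rewrite -leqn0 leqNgt -pfactor_dvdn ?expn1 // absz_gt0 //.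
have l4 : (logn p 4 <= 2)%N /\ (p != 2 -> logn p 4 = 0%N).
  have -> : 4%N = (2 ^ 2)%N by [].
  rewrite lognX logn_prime //; split; first by case: (p == 2).
  by move/negbTE => ->.
have hk2 : (p = 2 -> 2 <= k)%N.
  move=> e; rewrite -pfactor_dvdn ?absz_gt0 // e; exact: p2.
set j := (logn p 4 + logn p `|w|)%N.
have hj : (j.+1 <= 2 * k)%N.
  case: (eqVneq p 2) => [e|ne].
    have := hk2 e; move: l4 hw => [l4 _]; move: l4; rewrite /j; nlia.
  rewrite /j; move: l4 hw k1 => [_ /(_ ne) ->]; nlia.
have ds : ((p ^ k)%:Z %| s)%Z by rewrite dvdzE /= pfactor_dvdnn.
have ds2 : ((p ^ (2 * k))%:Z %| s ^+ 2)%Z.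
  by rewrite mulnC expnM PoszX; apply: dvdz_exp2r.
set Q := 5*W*s^+2 - 4*w*r^+2.
have hQ : (logn p `|Q| <= j)%N.
  rewrite leqNgt; apply/negP => hlt.
  have dQ : ((p ^ j.+1)%:Z %| Q)%Z by rewrite logn_int_dvd.
  have d5 : ((p ^ j.+1)%:Z %| 5 * W * s ^+ 2)%Z.
    apply: dvdz_mull; apply: dvdz_trans ds2.
    by rewrite dvdzE /= dvdn_exp2l.
  have d4 : ((p ^ j.+1)%:Z %| 4 * w * r ^+ 2)%Z.
    have -> : 4 * w * r ^+ 2 = 5 * W * s ^+ 2 - Q by rewrite /Q; ring.
    by rewrite rpredB.
  move: d4; rewrite logn_int_dvd //; last by rewrite !mulf_neq0 // expf_neq0.
  rewrite !abszM ?abszX (_ : `|4%R : int|%N = 4%N) // !lognM ?expn_gt0 ?muln_gt0 ?absz_gt0 ?r0 ?w0 ?expf_neq0 //.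
  rewrite ?lognX lr /j; nlia.
set lw := logn p `|w|.
have dP : ((p ^ lw)%:Z %| 4*W*s^+2 - 5*w*r^+2)%Z.
  apply: rpredB.
    apply: dvdz_mull; apply: dvdz_trans ds2; rewrite dvdzE /= dvdn_exp2l //.
    move: hw k1; rewrite /lw; nlia.
  by apply: dvdz_mulr; apply: dvdz_mull; rewrite dvdzE /= pfactor_dvdnn.
have dL : ((p ^ (3 * k + lw))%:Z %| c * x * r^+3 * Q)%Z.
  rewrite /Q -E expnD PoszM -mulrA; apply: dvdz_mull; apply: dvdz_mul => //.
  by rewrite mulnC expnM PoszX; apply: dvdz_exp2r.
move: dL; rewrite logn_int_dvd //; last by rewrite !mulf_neq0 // expf_neq0.
rewrite !abszM ?abszX !lognM ?expn_gt0 ?muln_gt0 ?absz_gt0 ?r0 ?c0 ?x0 ?Q0 ?expf_neq0 //.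
rewrite ?lognX !lr => h.
have hc0 : logn p `|c| = 0%N.
  apply/eqP; rewrite -leqn0 leqNgt; apply/negP => lc.
  have pc : (p %| `|c|)%N by rewrite -(expn1 p) pfactor_dvdn // absz_gt0.
  have px : logn p `|x| = 0%N.
    apply/eqP; rewrite -leqn0 leqNgt; apply/negP => lx.
    have : (p %| `|x|)%N by rewrite -(expn1 p) pfactor_dvdn // absz_gt0.
    move=> pxx; have : (p %| gcdn `|c| `|x|)%N by rewrite dvdn_gcd pc pxx.
    rewrite (eqP cop) dvdn1 => /eqP p1.
    by move: pp; rewrite p1.
  case: (eqVneq p 2) => [e|ne].
    have := hk2 e; move: l4 hQ h hc; rewrite px /j /lw; nlia.
  move: l4 => [_ /(_ ne) l4]; move: hQ h hc k1; rewrite px /j /lw l4; nlia.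
move: hQ h; rewrite hc0 /j /lw; nlia.
Qed.
Lemma cube_dvd (L c x s r W w : int) :
  coprime `|s| `|r| ->
  (forall p, prime p -> logn p `|w| <= 1)%N -> (forall p, prime p -> logn p `|c| <= 1)%N ->
  coprime `|c| `|x| ->
  x != 0 -> c != 0 -> w != 0 -> r != 0 -> s != 0 ->
  5*W*s^+2 - 4*w*r^+2 != 0 ->
  L * s^+3 * (4*W*s^+2 - 5*w*r^+2) = c * x * r^+3 * (5*W*s^+2 - 4*w*r^+2) ->
  (`|s| ^ 3 %| 8 * `|x|)%N.
Proof.
move=> csr hw hc cop x0 c0 w0 r0 s0 Q0 E.
have sp : (0 < `|s|)%N by rewrite absz_gt0.
apply/dvdn_partP; first by rewrite expn_gt0 sp.
move=> p; rewrite mem_primes => /andP [pp /andP [_ pd]].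
have ps : (p %| `|s|)%N by move: pd; rewrite Euclid_dvdX // => /andP [].
have pr : ~~ (p %| `|r|)%N.
  apply/negP => prr; have : (p %| gcdn `|s| `|r|)%N by rewrite dvdn_gcd ps prr.
  rewrite (eqP csr) dvdn1 => /eqP p1.
  by move: pp; rewrite p1.
rewrite p_part pfactor_dvdn ?muln_gt0 ?absz_gt0 // lognX lognM ?absz_gt0 //.
have l48 : (logn p 4 <= logn p 8)%N by apply: dvdn_leq_log.
have l8 : (p = 2 -> logn p 8 = 3)%N.
  by move=> ->; have -> : 8%N = (2 ^ 3)%N by []; rewrite pfactorK.
case: (boolP (p == 2)) => [/eqP e|ne].
  case: (boolP (4 %| `|s|)%N) => [h4|h4].
    have := key _ _ _ _ _ _ _ _ pp ps pr (fun _ => h4) (hw p pp) (hc p pp) cop x0 c0 w0 r0 Q0 E.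
    move: l48; nlia.
  have : (logn p `|s| <= 1)%N.
    rewrite leqNgt; apply/negP => h; move: h4; rewrite e in h *.
    by rewrite (_ : 4 = 2 ^ 2)%N // pfactor_dvdn // h.
  rewrite l8 //; nlia.
have := key _ _ _ _ _ _ _ _ pp ps pr (fun e => False_ind _ ((elimN eqP ne) e)) (hw p pp) (hc p pp) cop x0 c0 w0 r0 Q0 E.
move: l48; nlia.
Qed.
Lemma logn_nprime p n : ~~ prime p -> logn p n = 0%N.
Proof. move=> np; apply/eqP; rewrite -leqn0 leqNgt logn_gt0 mem_primes (negbTE np) //. Qed.

Lemma x2y3_inj (x y x' y' : nat) : (0 < x)%N -> (0 < y)%N -> (0 < x')%N -> (0 < y')%N ->
  (forall p, prime p -> logn p y <= 1)%N -> (forall p, prime p -> logn p y' <= 1)%N ->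
  (x ^ 2 * y ^ 3 = x' ^ 2 * y' ^ 3)%N -> x = x' /\ y = y'.
Proof.
move=> x0 y0 x0' y0' hy hy' E.
have H p : prime p -> logn p y = logn p y' /\ logn p x = logn p x'.
  move=> pp; have := congr1 (logn p) E.
  rewrite !lognM ?muln_gt0 ?x0 ?y0 ?x0' ?y0' //.
  have := hy p pp; have := hy' p pp; lia.
split; apply: eqn_from_log => // p; case: (boolP (prime p)) => pp;
  try (by case: (H p pp)); by rewrite !logn_nprime.
Qed.

Lemma sqf_logn (n : int) : squarefree n -> forall p, prime p -> (logn p `|n| <= 1)%N.
Proof.
move=> [n0 h] p pp; rewrite leqNgt; apply/negP => l2.
have : (p ^ 2 %| `|n|)%N by rewrite pfactor_dvdn // absz_gt0.
by move/h => p1; move: pp; rewrite p1.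
Qed.
Section S.
Variables (a1 a2 a3 : int) (X1 X2 X3 Y1 Y2 Y3 x1 x2 x3 y1 y2 y3 : nat).
Hypothesis H : S0P a1 a2 a3 X1 X2 X3 Y1 Y2 Y3 x1 x2 x3 y1 y2 y3.

Lemma S0_pos : [/\ (0 < x1)%N, (0 < x2)%N & (0 < x3)%N] /\ [/\ (0 < y1)%N, (0 < y2)%N & (0 < y3)%N].
Proof. by case: H => [[/andP[? _] /andP[? _] /andP[? _]] [/andP[? _] /andP[? _] /andP[? _]] _]; split; split; lia. Qed.

Lemma S0_cop_a2x1 : coprime `|a2| x1.
Proof.
case: H => _ _ [_ _ g _].
apply: (coprime_dvdl (n := `|a1 * a2 * a3|)); first by rewrite !abszM dvdn_mulr ?dvdn_mull.
apply: (coprime_dvdr (n := (x1 * x2 * x3 * y1 * y2 * y3)%N)); last by rewrite /coprime g.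
by rewrite -!mulnA dvdn_mulr.
Qed.

Lemma S0_cop_a1x2 : coprime `|a1| x2.
Proof.
case: H => _ _ [_ _ g _].
apply: (coprime_dvdl (n := `|a1 * a2 * a3|)); first by rewrite !abszM !dvdn_mulr.
apply: (coprime_dvdr (n := (x1 * x2 * x3 * y1 * y2 * y3)%N)); last by rewrite /coprime g.
rewrite -!mulnA; apply: dvdn_mull; exact: dvdn_mulr.
Qed.

Lemma S0_cop_y1y2 : coprime y1 y2.
Proof.
have [_ [y1p y2p _]] := S0_pos.
case: H => _ _ [E g1 g2 _].
rewrite /coprime; apply/negP => /negP hn.
have g0 : (1 < gcdn y1 y2)%N by have := gcdn_gt0 y1 y2; rewrite y1p /=; lia.
have pp := pdiv_prime g0.
set p := pdiv (gcdn y1 y2) in pp.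
have py1 : (p %| y1)%N by apply: dvdn_trans (pdiv_dvd _) (dvdn_gcdl _ _).
have py2 : (p %| y2)%N by apply: dvdn_trans (pdiv_dvd _) (dvdn_gcdr _ _).
have d3 : (p%:Z %| a3 * (x3 ^ 2 * y3 ^ 3)%:Z)%Z.
  have -> : a3 * (x3 ^ 2 * y3 ^ 3)%:Z = - (a1 * (x1 ^ 2 * y1 ^ 3)%:Z + a2 * (x2 ^ 2 * y2 ^ 3)%:Z).
    by rewrite -[a3 * _](addKr (a1 * (x1 ^ 2 * y1 ^ 3)%:Z + a2 * (x2 ^ 2 * y2 ^ 3)%:Z)) E addr0.
  rewrite rpredN; apply: rpredD; apply: dvdz_mull; rewrite dvdzE /=.
    by apply: dvdn_mull; apply: dvdn_exp py1.
  by apply: dvdn_mull; apply: dvdn_exp py2.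
move: d3; rewrite dvdzE /= abszM /= (Euclid_dvdM _ _ pp) => /orP [pa3|].
  have : (p %| gcdn `|(a1 * a2 * a3)%R| (x1 * x2 * x3 * y1 * y2 * y3))%N.
    rewrite dvdn_gcd; apply/andP; split.
      by rewrite abszM; apply: dvdn_mull.
    by rewrite -!mulnA; do 3! apply: dvdn_mull; apply: dvdn_mulr.
  by rewrite g2 dvdn1 => /eqP p1; move: pp; rewrite p1.
rewrite (Euclid_dvdM _ _ pp) !(Euclid_dvdX _ _ pp) => h3.
have : (p %| gcdn (gcdn (x1 * y1) (x2 * y2)) (x3 * y3))%N.
  rewrite !dvdn_gcd (dvdn_mull _ py1) (dvdn_mull _ py2) /=.
  by case/orP: h3 => /andP [h _]; [apply: dvdn_mulr | apply: dvdn_mull].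
by rewrite g1 dvdn1 => /eqP p1; move: pp; rewrite p1.
Qed.

End S.
Lemma rat_to_int (a1 a2 : int) (x1 x2 y1 y2 : nat) (g nu : rat) :
  a1 != 0 -> a2 != 0 -> (0 < x1)%N -> (0 < x2)%N -> g != 0 ->
  (a2 * x1%:Z)%:~R = nu * (4 * a1%:~R * y1%:R - 5 * g ^+ 2 * a2%:~R * y2%:R) ->
  (a1 * x2%:Z)%:~R = nu * g ^+ 3 * (5 * a1%:~R * y1%:R - 4 * g ^+ 2 * a2%:~R * y2%:R) ->
  [/\ (a1 * x2%:Z) * (denq g)^+3 * (4*(a1*y1%:Z)*(denq g)^+2 - 5*(a2*y2%:Z)*(numq g)^+2)
      = (a2 * x1%:Z) * (numq g)^+3 * (5*(a1*y1%:Z)*(denq g)^+2 - 4*(a2*y2%:Z)*(numq g)^+2),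
      4*(a1*y1%:Z)*(denq g)^+2 - 5*(a2*y2%:Z)*(numq g)^+2 != 0 &
      5*(a1*y1%:Z)*(denq g)^+2 - 4*(a2*y2%:Z)*(numq g)^+2 != 0].
Proof.
move=> a10 a20 x1p x2p g0 e1 e2.
have sq0 : ((denq g)%:~R : rat) != 0 by rewrite intr_eq0 denq_neq0.
have gE : g = (numq g)%:~R / (denq g)%:~R by rewrite divq_num_den.
have X10 : ((a2 * x1%:Z)%:~R : rat) != 0.
  by rewrite intr_eq0 mulf_neq0 // -lt0n.
have X20 : ((a1 * x2%:Z)%:~R : rat) != 0.
  by rewrite intr_eq0 mulf_neq0 // -lt0n.
have A0 : (4 * a1%:~R * y1%:R - 5 * g ^+ 2 * a2%:~R * y2%:R : rat) != 0.
  by apply: contra X10 => /eqP h; rewrite e1 h mulr0.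
have B0 : (5 * a1%:~R * y1%:R - 4 * g ^+ 2 * a2%:~R * y2%:R : rat) != 0.
  by apply: contra X20 => /eqP h; rewrite e2 h mulr0.
have Rq : (a1 * x2%:Z)%:~R * (4 * a1%:~R * y1%:R - 5 * g ^+ 2 * a2%:~R * y2%:R)
        = (a2 * x1%:Z)%:~R * g ^+ 3 * (5 * a1%:~R * y1%:R - 4 * g ^+ 2 * a2%:~R * y2%:R) :> rat.
  by rewrite e1 e2; ring.
set rr : rat := (numq g)%:~R in gE; set ss : rat := (denq g)%:~R in gE sq0.
have P0 : (4*(a1*y1%:Z)*(denq g)^+2 - 5*(a2*y2%:Z)*(numq g)^+2) != 0.
  rewrite -(intr_eq0 rat) !(rmorphB, rmorphM, rmorphXn) /= -/rr -/ss.
  have -> : (4%:~R * (a1%:~R * (y1%:Z)%:~R) * ss ^+ 2 - 5%:~R * (a2%:~R * (y2%:Z)%:~R) * rr ^+ 2 : rat)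
     = (4 * a1%:~R * y1%:R - 5 * g ^+ 2 * a2%:~R * y2%:R) * ss ^+ 2.
    by rewrite gE; field.
  by rewrite mulf_neq0 // expf_neq0.
have Q0 : (5*(a1*y1%:Z)*(denq g)^+2 - 4*(a2*y2%:Z)*(numq g)^+2) != 0.
  rewrite -(intr_eq0 rat) !(rmorphB, rmorphM, rmorphXn) /= -/rr -/ss.
  have -> : (5%:~R * (a1%:~R * (y1%:Z)%:~R) * ss ^+ 2 - 4%:~R * (a2%:~R * (y2%:Z)%:~R) * rr ^+ 2 : rat)
     = (5 * a1%:~R * y1%:R - 4 * g ^+ 2 * a2%:~R * y2%:R) * ss ^+ 2.
    by rewrite gE; field.
  by rewrite mulf_neq0 // expf_neq0.
split => //.
apply: (intr_inj (R := rat)); rewrite !(rmorphB, rmorphM, rmorphXn) /= -/rr -/ss.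
have -> : ((a1%:~R * (x2%:Z)%:~R) * ss ^+ 3 * (4%:~R * (a1%:~R * (y1%:Z)%:~R) * ss ^+ 2 - 5%:~R * (a2%:~R * (y2%:Z)%:~R) * rr ^+ 2) : rat)
   = (a1 * x2%:Z)%:~R * (4 * a1%:~R * y1%:R - 5 * g ^+ 2 * a2%:~R * y2%:R) * ss ^+ 5.
  by rewrite gE rmorphM /=; field.
rewrite Rq gE rmorphM /=; field; exact: sq0.
Qed.
Definition Req (a1 a2 : int) (x1 x2 y1 y2 : nat) (r s : int) :=
  (a1 * x2%:Z) * s^+3 * (4*(a1*y1%:Z)*s^+2 - 5*(a2*y2%:Z)*r^+2)
      = (a2 * x1%:Z) * r^+3 * (5*(a1*y1%:Z)*s^+2 - 4*(a2*y2%:Z)*r^+2).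

Lemma y_determined (a1 a2 : int) (x1 x2 y1 y2 y1' y2' : nat) (r s : int) :
  a1 != 0 -> a2 != 0 -> (0 < x1)%N -> (0 < x2)%N -> r != 0 -> s != 0 ->
  (0 < y1)%N -> (0 < y1')%N -> (0 < y2)%N -> coprime y1 y2 -> coprime y1' y2' ->
  Req a1 a2 x1 x2 y1 y2 r s -> Req a1 a2 x1 x2 y1' y2' r s -> y1 = y1' /\ y2 = y2'.
Proof.
move=> a10 a20 x1p x2p r0 s0 y1p y1p' y2p c c' E E'.
set c1 := 4 * a1^+2 * x2%:Z * s^+5 - 5 * a1 * a2 * x1%:Z * r^+3 * s^+2.
set c2 := 5 * a1 * a2 * x2%:Z * s^+3 * r^+2 - 4 * a2^+2 * x1%:Z * r^+5.
have L (u v : nat) : Req a1 a2 x1 x2 u v r s -> u%:Z * c1 = v%:Z * c2.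
  rewrite /Req /c1 /c2 => h; apply/eqP; rewrite -subr_eq0; apply/eqP.
  rewrite -[RHS](subrr ((a2 * x1%:Z) * r^+3 * (5*(a1*u%:Z)*s^+2 - 4*(a2*v%:Z)*r^+2))).
  rewrite -{1}h; ring.
have e := L _ _ E; have e' := L _ _ E'.
set K := a1 * x2%:Z * s^+3; set M := a2 * x1%:Z * r^+3.
have K0 : K != 0 by rewrite /K !mulf_neq0 ?expf_neq0 // -lt0n.
have c10 : c1 != 0.
  apply/negP => /eqP h1.
  have h2 : c2 = 0.
    apply/eqP; move: e; rewrite h1 mulr0 => /esym/eqP; rewrite mulf_eq0 => /orP [|//].
    by move=> /eqP [] y20; move: y2p; rewrite y20.
  have f1 : c1 = a1 * s^+2 * (4*K - 5*M) by rewrite /c1 /K /M; ring.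
  have f2 : c2 = a2 * r^+2 * (5*K - 4*M) by rewrite /c2 /K /M; ring.
  move: h1 h2; rewrite f1 f2 => /eqP; rewrite !mulf_eq0 (negbTE a10) (negbTE s0) /= => /eqP k1 /eqP.
  rewrite !mulf_eq0 (negbTE a20) (negbTE r0) /= => /eqP k2.
  have : 9 * K = 5 * (5*K - 4*M) - 4 * (4*K - 5*M) by ring.
  rewrite k1 k2 subr0 mulr0 => /eqP; rewrite mulf_eq0 /= (negbTE K0).
  done.
have h : (y1 * y2')%:Z * c1 = (y1' * y2)%:Z * c1.
  have -> : (y1 * y2')%:Z * c1 = y2'%:Z * (y1%:Z * c1) by rewrite PoszM; ring.
  have -> : (y1' * y2)%:Z * c1 = y2%:Z * (y1'%:Z * c1) by rewrite PoszM; ring.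
  rewrite e e'; ring.
move/(mulIf c10): h => [] h.
have d1 : (y1 %| y1')%N by rewrite -(Gauss_dvdr _ c) mulnC -h dvdn_mulr.
have d2 : (y1' %| y1)%N by rewrite -(Gauss_dvdr _ c') mulnC h dvdn_mulr.
have ey : y1 = y1' by apply/eqP; rewrite eqn_dvd d1 d2.
split => //; move: h; rewrite -ey mulnC [(y1 * _)%N]mulnC => /eqP; rewrite eqn_pmul2r // => /eqP.
by [].
Qed.
Lemma sub8 (f : nat -> nat) X :
  (\sum_(1 <= i < X.+1) f (8*i) <= \sum_(1 <= j < (8*X).+1) f j)%N.
Proof.
elim: X => [|X IH]; first by rewrite !big_geq.
rewrite big_nat_recr //= [Z in (_ <= Z)%N](@big_cat_nat _ _ _ (8*X).+1) //=; last by lia.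
apply: leq_add => //.
rewrite (_ : (8 * X.+1).+1 = (8 * X + 7).+2); last by lia.
rewrite big_nat_recr /=; last by lia.
by rewrite (_ : (8 * X + 7).+1 = 8 * X.+1)%N; [apply: leq_addl | lia].
Qed.

Lemma cnt_j (X j : nat) : (0 < j)%N ->
  ((\sum_(i < X.+1) ((0 < i) && (j ^ 3 %| 8 * i))%N) * j ^ 3 <= 8 * X)%N.
Proof.
move=> j0.
have -> : (\sum_(i < X.+1) ((0 < i) && (j ^ 3 %| 8 * i)) = \sum_(1 <= i < X.+1) (j ^ 3 %| 8 * i))%N.
  rewrite (_ : (\sum_(i < X.+1) ((0 < i) && (j ^ 3 %| 8 * i)))%N =
      (\sum_(0 <= i < X.+1) ((0 < i) && (j ^ 3 %| 8 * i)))%N); last by rewrite big_mkord.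
  rewrite big_ltn //=.
  by rewrite add0n; apply: eq_big_nat => i /andP [i0 _]; rewrite i0.
apply: leq_trans (leq_trunc_div (8 * X) (j ^ 3)).
rewrite leq_mul2r divn_count_dvd; apply/orP; right.
exact: (sub8 (fun k => (j ^ 3 %| k)%N)).
Qed.
Lemma inv_cube_aux (R : realFieldType) (N : nat) :
  \sum_(s < N.+1) (if (0 < s)%N then ((s%:R : R) ^+ 3)^-1 else 0) <= 2 - 2 / N.+1%:R.
Proof.
elim: N => [|N IH].
  by rewrite big_ord1 /= divr1 subrr.
rewrite big_ord_recr /=.
apply: le_trans (lerD IH (lexx _)) _.
set n : R := N.+1%:R.
have n1 : 1 <= n by rewrite /n ler1n.
have -> : (N.+2%:R : R) = n + 1 by rewrite /n -natr1.
rewrite -/n -subr_ge0; clearbody n.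
have n0 : n != 0 by rewrite gt_eqF // (lt_le_trans ltr01 n1).
have n10 : n + 1 != 0 by rewrite gt_eqF // (lt_le_trans ltr01) // lerDr (le_trans ler01 n1).
have -> : 2 - 2 / (n + 1) - (2 - 2 / n + (n ^+ 3)^-1) = (2 * n + 1) * (n - 1) / (n ^+ 3 * (n + 1)).
  by field; rewrite n0 n10.
have n0' : 0 <= n by apply: le_trans n1.
apply: divr_ge0; first by rewrite mulr_ge0 // ?subr_ge0 // addr_ge0 // mulr_ge0.
by rewrite mulr_ge0 // ?exprn_ge0 // addr_ge0.
Qed.

Lemma inv_cube_sum (R : realFieldType) (N : nat) :
  \sum_(s < N) (if (0 < s)%N then ((s%:R : R) ^+ 3)^-1 else 0) <= 2.
Proof.
case: N => [|N]; first by rewrite big_ord0 ler0n.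
apply: le_trans (inv_cube_aux R N) _.
by rewrite gerBl divr_ge0.
Qed.
Lemma cardA (X : nat) :
  (#|[set p : 'I_X.+1 * 'I_(8*X).+1 | (0 < p.1)%N && (0 < p.2)%N && (p.2 ^ 3 %| 8 * p.1)%N]| <= 16 * X)%N.
Proof.
set A := [set p : 'I_X.+1 * 'I_(8*X).+1 | _].
have E : #|A| = (\sum_(j < (8*X).+1) \sum_(i < X.+1) ((0 < i) && (0 < j) && (j ^ 3 %| 8 * i)))%N.
  rewrite -sum1_card big_mkcond /= exchange_big pair_big /=.
  by apply: eq_bigr => [[i j]] _; rewrite inE /=; case: ifP.
rewrite -(ler_nat rat) E natr_sum.
apply: (@le_trans _ _ (\sum_(j < (8*X).+1) ((8 * X)%:R * (if (0 < j)%N then ((j%:R : rat) ^+ 3)^-1 else 0)))).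
  apply: ler_sum => j _.
  case: (posnP j) => [j0|jp].
    rewrite j0 mulr0 big1 // => i _; by rewrite andbF.
  have h := cnt_j X j jp.
  have j3 : 0 < (j%:R : rat) ^+ 3 by rewrite exprn_gt0 // ltr0n.
  rewrite ler_pdivlMr //.
  rewrite -natrX -natrM ler_nat; apply: leq_trans h; rewrite leq_mul2r; apply/orP; right.
  by apply: leq_sum => i _; rewrite andbT.
rewrite -mulr_sumr.
apply: le_trans (ler_wpM2l _ (inv_cube_sum rat (8*X).+1)) _ => //.
by rewrite -natrM ler_nat mulnC mulnA.
Qed.

Lemma sqf_y (a : int) (y : nat) : (0 < y)%N -> squarefree (a * y%:Z) ->
  forall p, prime p -> (logn p y <= 1)%N /\ (logn p `|a| <= 1)%N.
Proof.
move=> y0 sq p pp; have h := sqf_logn _ sq p pp.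
have a0 : a != 0 by case: sq => hh _; apply: contraNneq hh => ->; rewrite mul0r.
move: h; rewrite abszM lognM ?absz_gt0 //=; lia.
Qed.

Lemma wit_facts (a1 a2 a3 : int) (X1 X2 X3 Y1 Y2 Y3 x1 x2 x3 y1 y2 y3 : nat) (g nu : rat) :
  a1 != 0 -> a2 != 0 -> a3 != 0 ->
  S0P a1 a2 a3 X1 X2 X3 Y1 Y2 Y3 x1 x2 x3 y1 y2 y3 -> g != 0 ->
  (a2 * x1%:Z)%:~R = nu * (4 * a1%:~R * y1%:R - 5 * g ^+ 2 * a2%:~R * y2%:R) ->
  (a1 * x2%:Z)%:~R = nu * g ^+ 3 * (5 * a1%:~R * y1%:R - 4 * g ^+ 2 * a2%:~R * y2%:R) ->
  [/\ Req a1 a2 x1 x2 y1 y2 (numq g) (denq g), (`|denq g| ^ 3 %| 8 * x1)%N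
    & (`|numq g| ^ 3 %| 8 * x2)%N].
Proof.
move=> a10 a20 a30 H g0 e1 e2.
have [[x1p x2p _] [y1p y2p _]] := S0_pos _ _ _ _ _ _ _ _ _ _ _ _ _ _ _ H.
have [E P0 Q0] := rat_to_int _ _ _ _ _ _ _ _ a10 a20 x1p x2p g0 e1 e2.
have [_ _ [_ _ _ [sq1 sq2 _]]] := H.
have r0 : numq g != 0 by rewrite numq_eq0.
have s0 : denq g != 0 by rewrite denq_neq0.
have w10 : a1 * y1%:Z != 0 by rewrite mulf_neq0 // -lt0n.
have w20 : a2 * y2%:Z != 0 by rewrite mulf_neq0 // -lt0n.
have cnd : coprime `|denq g| `|numq g| by rewrite coprime_sym coprime_num_den.
split => //.
  apply: (cube_dvd (a1 * x2%:Z) a2 x1%:Z (denq g) (numq g) (a1 * y1%:Z) (a2 * y2%:Z)) => //.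
  - by move=> p pp; exact: sqf_logn _ sq2 p pp.
  - by move=> p pp; have [] := sqf_y _ _ y2p sq2 p pp.
  - exact: (S0_cop_a2x1 _ _ _ _ _ _ _ _ _ _ _ _ _ _ _ H).
  - by rewrite -lt0n.
apply: (cube_dvd (a2 * x1%:Z) a1 x2%:Z (numq g) (denq g) (a2 * y2%:Z) (a1 * y1%:Z)) => //.
- by rewrite coprime_sym.
- by move=> p pp; exact: sqf_logn _ sq1 p pp.
- by move=> p pp; have [] := sqf_y _ _ y1p sq1 p pp.
- exact: (S0_cop_a1x2 _ _ _ _ _ _ _ _ _ _ _ _ _ _ _ H).
- by rewrite -lt0n.
- by apply: contra P0 => /eqP h; rewrite -oppr_eq0 -h; apply/eqP; ring.
- move: E; rewrite /Req => E.
  rewrite (_ : _ * _ * _ = - ((a2 * x1%:Z) * numq g ^+ 3 * (5 * (a1 * y1%:Z) * denq g ^+ 2 - 4 * (a2 * y2%:Z) * numq g ^+ 2))); last by ring.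
  rewrite -E; ring.
Qed.
Definition wit (a1 a2 : int) (x1 x2 y1 y2 : nat) (g nu : rat) : Prop :=
  [/\ g != 0, nu != 0,
    (a2 * x1%:Z)%:~R = nu * (4 * a1%:~R * y1%:R - 5 * g ^+ 2 * a2%:~R * y2%:R)
  & (a1 * x2%:Z)%:~R
      = nu * g ^+ 3 * (5 * a1%:~R * y1%:R - 4 * g ^+ 2 * a2%:~R * y2%:R)].

Theorem lemma15 (R : realType) :
  exists C : R, 0 < C /\
  forall (a1 a2 a3 : int) (B : R) (X1 X2 X3 Y1 Y2 Y3 : nat),
    a1 != 0 -> a2 != 0 -> a3 != 0 ->
    squarefree a1 -> squarefree a2 -> squarefree a3 ->
    coprimez a1 a2 -> coprimez a1 a3 -> coprimez a2 a3 ->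
    2 <= B ->
    is_pow2 X1 -> is_pow2 X2 -> is_pow2 X3 ->
    is_pow2 Y1 -> is_pow2 Y2 -> is_pow2 Y3 ->
    X1%:R <= 2 * B -> X2%:R <= 2 * B -> X3%:R <= 2 * B ->
    Y1%:R <= 2 * B -> Y2%:R <= 2 * B -> Y3%:R <= 2 * B ->
    (X1 ^ 2 * Y1 ^ 3)%N%:R <= 32 * B / (absz a1)%:R ->
    (X2 ^ 2 * Y2 ^ 3)%N%:R <= 32 * B / (absz a2)%:R ->
    (X3 ^ 2 * Y3 ^ 3)%N%:R <= 32 * B / (absz a3)%:R ->
    (forall X : nat, X \in [:: X1; X2; X3] ->
       B `^ (5^-1 - 60^-1) <= X%:R /\ X%:R <= B `^ (5^-1 + 60^-1)) ->
    (forall Y : nat, Y \in [:: Y1; Y2; Y3] ->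
       B `^ (5^-1 - 90^-1) <= Y%:R /\ Y%:R <= B `^ (5^-1 + 90^-1)) ->
    #|S1set a1 a2 a3 X1 X2 X3 Y1 Y2 Y3|
      = #|S1star a1 a2 a3 X1 X2 X3 Y1 Y2 Y3| /\
    (#|S1set a1 a2 a3 X1 X2 X3 Y1 Y2 Y3|%:R <= C * B `^ (2^-1)).
Proof.
exists 512%:R; split; first by rewrite ltr0n.
move=> a1 a2 a3 B X1 X2 X3 Y1 Y2 Y3 a10 a20 a30 sq1 sq2 sq3 c12 c13 c23 B2
  p1 p2 p3 q1 q2 q3 hX1 hX2 hX3 hY1 hY2 hY3 h1 h2 h3 hX hY.
set S := S1set a1 a2 a3 X1 X2 X3 Y1 Y2 Y3.
have memS (t : box X1 X2 X3 Y1 Y2 Y3) : t \in S ->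
    S1P a1 a2 a3 X1 X2 X3 Y1 Y2 Y3 (val t.1.1.1.1.1) (val t.1.1.1.1.2)
      (val t.1.1.1.2) (val t.1.1.2) (val t.1.2) (val t.2).
  by rewrite inE => /asboolP.
have inj4 : {in S &, injective (@proj4 X1 X2 X3 Y1 Y2 Y3)}.
  move=> t t' /memS [H _] /memS [H' _].
  case: t H => [[[[[o1 o2] o3] o4] o5] o6] /= H.
  case: t' H' => [[[[[o1' o2'] o3'] o4'] o5'] o6'] /= H'.
  rewrite /proj4 /= => [[e1 e2 e4 e5]]; subst o1' o2' o4' o5'.
  have [[_ _ x3p] [_ _ y3p]] := S0_pos _ _ _ _ _ _ _ _ _ _ _ _ _ _ _ H.
  have [[_ _ x3p'] [_ _ y3p']] := S0_pos _ _ _ _ _ _ _ _ _ _ _ _ _ _ _ H'.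
  have [_ _ [E _ _ [_ _ s3]]] := H.
  have [_ _ [E' _ _ [_ _ s3']]] := H'.
  have e : (val o3 ^ 2 * val o6 ^ 3 = val o3' ^ 2 * val o6' ^ 3)%N.
    by have := etrans E (esym E'); move=> /addrI /(mulfI a30) [].
  have [] := x2y3_inj _ _ _ _ x3p y3p x3p' y3p'
    (fun p pp => (sqf_y _ _ y3p s3 p pp).1) (fun p pp => (sqf_y _ _ y3p' s3' p pp).1) e.
  by move=> /val_inj -> /val_inj ->.
split.
  by rewrite /S1star card_in_imset.
pose T := (('I_X1.+1 * 'I_(8*X1).+1) * ('I_X2.+1 * 'I_(8*X2).+1) * bool)%type.
pose Good (t : box X1 X2 X3 Y1 Y2 Y3) (u : T) := exists g nu,
  wit a1 a2 (val t.1.1.1.1.1) (val t.1.1.1.1.2) (val t.1.1.2) (val t.1.2) g nu /\ u = ((t.1.1.1.1.1, inord `|denq g|), (t.1.1.1.1.2, inord `|numq g|), (numq g < 0)).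
have ex : forall t, exists u : T, t \in S -> Good t u.
  move=> t; case: (boolP (t \in S)) => tS; last by exists ((ord0, ord0), (ord0, ord0), false).
  have [_ [g [nu w]]] := memS t tS.
  by exists ((t.1.1.1.1.1, inord `|denq g|), (t.1.1.1.1.2, inord `|numq g|), (numq g < 0)) => _; exists g, nu.
have [f hf] := choice ex.
have facts t : t \in S -> exists g nu, wit a1 a2 (val t.1.1.1.1.1) (val t.1.1.1.1.2) (val t.1.1.2) (val t.1.2) g nu /\ f t = ((t.1.1.1.1.1, inord `|denq g|), (t.1.1.1.1.2, inord `|numq g|), (numq g < 0)) /\ [/\ Req a1 a2 (val t.1.1.1.1.1) (val t.1.1.1.1.2) (val t.1.1.2) (val t.1.2) (numq g) (denq g),
      (`|denq g| < (8 * X1).+1)%N, (`|numq g| < (8 * X2).+1)%N,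
      (`|denq g| ^ 3 %| 8 * val t.1.1.1.1.1)%N & (`|numq g| ^ 3 %| 8 * val t.1.1.1.1.2)%N].
  move=> tS; have [g [nu [w ef]]] := hf t tS; exists g, nu; split => //; split => //.
  have [H _] := memS t tS; have [g0 nu0 e1 e2] := w.
  have [[x1p x2p _] _] := S0_pos _ _ _ _ _ _ _ _ _ _ _ _ _ _ _ H.
  have [Rq d1 d2] := wit_facts _ _ _ _ _ _ _ _ _ _ _ _ _ _ _ g nu a10 a20 a30 H g0 e1 e2.
  have b1 : (val t.1.1.1.1.1 < X1.+1)%N by exact: ltn_ord.
  have b2 : (val t.1.1.1.1.2 < X2.+1)%N by exact: ltn_ord.
  have s0 : (0 < `|denq g|)%N by rewrite absz_gt0 denq_neq0.
  have r0 : (0 < `|numq g|)%N by rewrite absz_gt0 numq_eq0.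
  have l1 : (`|denq g| ^ 3 <= 8 * val t.1.1.1.1.1)%N by apply: dvdn_leq; rewrite // muln_gt0 x1p.
  have l2 : (`|numq g| ^ 3 <= 8 * val t.1.1.1.1.2)%N by apply: dvdn_leq; rewrite // muln_gt0 x2p.
  have k1 : (`|denq g| <= `|denq g| ^ 3)%N by rewrite expnS leq_pmulr // expn_gt0 s0.
  have k2 : (`|numq g| <= `|numq g| ^ 3)%N by rewrite expnS leq_pmulr // expn_gt0 r0.
  split => //.
    by move: l1 b1 k1; nlia.
  by move: l2 b2 k2; nlia.
have injf : {in S &, injective f}.
  move=> t t' tS tS' eq.
  have [g [nu [[g0 nu0 e1 e2] [ef [Rq b1 b2 _ _]]]]] := facts t tS.
  have [g' [nu' [[g0' nu0' e1' e2'] [ef' [Rq' b1' b2' _ _]]]]] := facts t' tS'.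
  have [H _] := memS t tS; have [H' _] := memS t' tS'.
  move: eq; rewrite ef ef' => -[eo1 es eo2 em eb].
  have es' : (`|denq g| = `|denq g'|)%N by rewrite -(inordK b1) -(inordK b1') es.
  have em' : (`|numq g| = `|numq g'|)%N by rewrite -(inordK b2) -(inordK b2') em.
  have en : numq g = numq g' by rewrite [LHS]intEsign [RHS]intEsign eb em'.
  have ed : denq g = denq g'.
    by rewrite -[LHS]gtz0_abs ?denq_gt0 // -[RHS]gtz0_abs ?denq_gt0 // es'.
  have gg : g = g' by rewrite -[g]divq_num_den -[g']divq_num_den en ed.
  subst g'.
  apply: inj4 => //.
  have [[x1p x2p _] [y1p y2p _]] := S0_pos _ _ _ _ _ _ _ _ _ _ _ _ _ _ _ H.
  have [[_ _ _] [y1p' _ _]] := S0_pos _ _ _ _ _ _ _ _ _ _ _ _ _ _ _ H'.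
  have c := S0_cop_y1y2 _ _ _ _ _ _ _ _ _ _ _ _ _ _ _ H.
  have c' := S0_cop_y1y2 _ _ _ _ _ _ _ _ _ _ _ _ _ _ _ H'.
  rewrite -eo1 -eo2 in Rq'.
  have r0 : numq g != 0 by rewrite numq_eq0.
  have [ey1 ey2] := y_determined _ _ _ _ _ _ _ _ _ _ a10 a20 x1p x2p
    r0 (denq_neq0 g) y1p y1p' y2p c c' Rq Rq'.
  by rewrite /proj4 eo1 eo2 (val_inj ey1) (val_inj ey2).
have cardS : (#|S| <= 512 * X1 * X2)%N.
  rewrite -(card_in_imset injf).
  set A1 := [set p : 'I_X1.+1 * 'I_(8*X1).+1 | (0 < p.1)%N && (0 < p.2)%N && (p.2 ^ 3 %| 8 * p.1)%N].
  set A2 := [set p : 'I_X2.+1 * 'I_(8*X2).+1 | (0 < p.1)%N && (0 < p.2)%N && (p.2 ^ 3 %| 8 * p.1)%N].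
  apply: leq_trans (subset_leq_card (B := setX (setX A1 A2) [set: bool]) _) _.
    apply/subsetP => u /imsetP [t tS ->].
    have [g [nu [[g0 _ _ _] [ef [_ b1 b2 d1 d2]]]]] := facts t tS.
    have [H _] := memS t tS.
    have [[x1p x2p _] _] := S0_pos _ _ _ _ _ _ _ _ _ _ _ _ _ _ _ H.
    rewrite ef !inE /= !inordK // x1p x2p d1 d2 absz_gt0 denq_neq0 /= absz_gt0 numq_eq0 g0.
    done.
  rewrite !cardsX cardsT card_bool.
  have := cardA X1; have := cardA X2; rewrite -/A1 -/A2 => c2 c1.
  apply: leq_trans (leq_mul (leq_mul c1 c2) (leqnn 2)) _.
  by rewrite (_ : 16 * X1 * (16 * X2) * 2 = 512 * X1 * X2)%N //; ring.
have [_ hx1] := hX X1 (mem_head _ _).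
have [_ hx2] : _ /\ _ := hX X2 ltac:(by rewrite !inE eqxx orbT).
apply: (@le_trans _ _ ((512 * X1 * X2)%N%:R)); first by rewrite ler_nat.
rewrite !natrM -mulrA; apply: ler_wpM2l => //.
have B0 : 0 < B by apply: lt_le_trans B2; rewrite ltr0n.
apply: le_trans (ler_pM (ler0n _ _) (ler0n _ _) hx1 hx2) _.
rewrite -powRD; last by apply/implyP => _; rewrite gt_eqF.
apply: ler_powR; first by apply: le_trans B2; rewrite ler1n.
lra.
Qed.
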